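(* Let $\mathbf{S}$ be any one of the four systems $\mathbf{G3N}$, $\mathbf{G3NeF}$, $\mathbf{G3CoPC}$, $\mathbf{G3MPC}$. Let $\Gamma,\Delta$ be finite multisets of formulas and $\varphi$ a formula such that the common language of $\Gamma$ and $\Delta,\varphi$ is non-empty. If $\Gamma,\Delta\Rightarrow\varphi$ is derivable in $\mathbf{S}$, then there exists a formula $\sigma$ such that (1) every propositional variable occurring in $\sigma$ belongs to the common language of $\Gamma$ and $\Delta,\varphi$, and (2) both $\Gamma\Rightarrow\sigma$ and $\Delta,\sigma\Rightarrow\varphi$ are derivable in $\mathbf{S}$.
   Context: Formulas are generated from a countable set of propositional variables $p,q,\dots$ and the constant $\top$ by the grammar $\varphi::= p\mid\top\mid\varphi\wedge\varphi\mid\varphi\vee\varphi\mid\varphi\to\varphi\mid\neg\varphi$ (there is no constant $\bot$). $\varphi\leftrightarrow\psi$ abbreviates $(\varphi\to\psi)\wedge(\psi\to\varphi)$. A sequent is an expression $\Gamma\Rightarrow\varphi$ where $\Gamma$ is a finite multiset of formulas and $\varphi$ is a formula (the goal); $\Gamma,\Delta$ denotes multiset union and $\Gamma,\alpha$ denotes $\Gamma$ with one more occurrence of $\alpha$. Rules ($p$ a propositional variable): (ax) $\Gamma,p\Rightarrow p$ (no premises); ($\top$) $\Gamma\Rightarrow\top$ (no premises); ($\to$r) from $\Gamma,\alpha\Rightarrow\beta$ infer $\Gamma\Rightarrow\alpha\to\beta$; ($\to$l) from $\Gamma,\alpha\to\beta\Rightarrow\alpha$ and $\Gamma,\beta\Rightarrow\varphi$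 infer $\Gamma,\alpha\to\beta\Rightarrow\varphi$; ($\wedge$r) from $\Gamma\Rightarrow\alpha$ and $\Gamma\Rightarrow\beta$ infer $\Gamma\Rightarrow\alpha\wedge\beta$; ($\wedge$l) from $\Gamma,\alpha,\beta\Rightarrow\varphi$ infer $\Gamma,\alpha\wedge\beta\Rightarrow\varphi$; ($\vee$r$_1$), ($\vee$r$_2$) from $\Gamma\Rightarrow\alpha$ (resp. $\Gamma\Rightarrow\beta$) infer $\Gamma\Rightarrow\alpha\vee\beta$; ($\vee$l) from $\Gamma,\alpha\Rightarrow\varphi$ and $\Gamma,\beta\Rightarrow\varphi$ infer $\Gamma,\alpha\vee\beta\Rightarrow\varphi$; (n) from $\Gamma,\neg\alpha,\beta\Rightarrow\alpha$ and $\Gamma,\neg\alpha,\alpha\Rightarrow\beta$ infer $\Gamma,\neg\alpha\Rightarrow\neg\beta$; (nef) from $\Gamma,\neg\alpha\Rightarrow\alpha$ infer $\Gamma,\neg\alpha\Rightarrow\neg\beta$; (copc) from $\Gamma,\neg\alpha,\beta\Rightarrow\alpha$ infer $\Gamma,\neg\alpha\Rightarrow\neg\beta$; (an) from $\Gamma,\alpha\Rightarrow\neg\alpha$ infer $\Gamma\Rightarrow\neg\alpha$. The rules (ax) through ($\vee$l) are the positive rules. The four systems are: $\mathbf{G3N}$ = positive rules + (n); $\mathbf{G3NeF}$ = positive rules + (n) + (nef); $\mathbf{G3CoPC}$ = positive rules + (copc); $\mathbf{G3MPC}$ = positive rules + (copc) + (an). None of them contains weakening, contraction or cut as a rule. A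 derivation is a finite tree of rule instances with leaves instances of (ax) or ($\top$); its height is the number of inference steps on a longest branch. A sequent is derivable if it has a derivation; a formula $\varphi$ is a theorem if $\Rightarrow\varphi$ (empty antecedent) is derivable. The common language of two multisets of formulas $\Gamma$ and $\Delta'$ is the set of propositional variables that occur both in some formula of $\Gamma$ and in some formula of $\Delta'$; here $\Delta'$ is $\Delta$ together with $\varphi$. *)

(* Defs.v *)
From Stdlib Require Import List Permutation.
Import ListNotations.

Inductive formula : Type :=
| Var : nat -> formula
| Top : formula
| And : formula -> formula -> formula
| Or  : formula -> formula -> formula
| Imp : formula -> formula -> formula
| Neg : formula -> formula.

Fixpoint vars (f : formula) : list nat :=
  match f with
  | Var p => [p]
  | Top => []
  | And a b | Or a b | Imp a b => vars a ++ vars b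
  | Neg a => vars a
  end.

Definition occurs (p : nat) (f : formula) : Prop := In p (vars f).

Definition occurs_in (p : nat) (G : list formula) : Prop :=
  exists f, In f G /\ occurs p f.

Definition common_lang (G D : list formula) (phi : formula) (p : nat) : Prop :=
  occurs_in p G /\ occurs_in p (phi :: D).

Inductive system : Type := G3N | G3NeF | G3CoPC | G3MPC.

Definition has_n (S : system) : bool :=
  match S with G3N | G3NeF => true | _ => false end.
Definition has_nef (S : system) : bool :=
  match S with G3NeF => true | _ => false end.
Definition has_copc (S : system) : bool :=
  match S with G3CoPC | G3MPC => true | _ => false end.
Definition has_an (S : system) : bool :=
  match S with G3MPC => true | _ => false end.

(* Derivability of the sequent G => phi in system S.  Antecedents are
   multisets, represented by lists; a conclusion "Gamma, alpha" is any list
   that is a permutation of alpha :: Gamma. *)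
Inductive deriv (S : system) : list formula -> formula -> Prop :=
| r_ax : forall G G' p, Permutation G' (Var p :: G) -> deriv S G' (Var p)
| r_top : forall G, deriv S G Top
| r_impR : forall G a b, deriv S (a :: G) b -> deriv S G (Imp a b)
| r_impL : forall G G' a b phi, Permutation G' (Imp a b :: G) ->
    deriv S (Imp a b :: G) a -> deriv S (b :: G) phi -> deriv S G' phi
| r_andR : forall G a b, deriv S G a -> deriv S G b -> deriv S G (And a b)
| r_andL : forall G G' a b phi, Permutation G' (And a b :: G) ->
    deriv S (a :: b :: G) phi -> deriv S G' phi
| r_orR1 : forall G a b, deriv S G a -> deriv S G (Or a b)
| r_orR2 : forall G a b, deriv S G b -> deriv S G (Or a b)
| r_orL : forall G G' a b phi, Permutation G' (Or a b :: G) ->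
    deriv S (a :: G) phi -> deriv S (b :: G) phi -> deriv S G' phi
| r_n : forall G G' a b, has_n S = true -> Permutation G' (Neg a :: G) ->
    deriv S (Neg a :: b :: G) a -> deriv S (Neg a :: a :: G) b ->
    deriv S G' (Neg b)
| r_nef : forall G G' a b, has_nef S = true -> Permutation G' (Neg a :: G) ->
    deriv S (Neg a :: G) a -> deriv S G' (Neg b)
| r_copc : forall G G' a b, has_copc S = true -> Permutation G' (Neg a :: G) ->
    deriv S (Neg a :: b :: G) a -> deriv S G' (Neg b)
| r_an : forall G a, has_an S = true ->
    deriv S (a :: G) (Neg a) -> deriv S G (Neg a).

(* Main.v *)
Require Import Defs.
From Stdlib Require Import List Permutation Lia.
Import ListNotations.

Definition fdec : forall x y : formula, {x=y}+{x<>y}.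
Proof. decide equality; apply PeanoNat.Nat.eq_dec. Qed.

Lemma cnt_cons (a x : formula) l : count_occ fdec (a::l) x = (if fdec a x then 1 else 0) + count_occ fdec l x.
Proof. simpl. destruct (fdec a x); reflexivity. Qed.

Ltac psolve :=
  let x := fresh "x" in
  apply (Permutation_count_occ fdec); intro x;
  repeat match goal with H : Permutation _ _ |- _ =>
     let h := fresh "h" in pose proof (proj1 (Permutation_count_occ fdec _ _) H x) as h; clear H end;
  repeat (rewrite ?count_occ_app, ?cnt_cons in * );
  repeat match goal with
   | |- context [fdec ?a ?b] => destruct (fdec a b)
   | H: context [fdec ?a ?b] |- _ => destruct (fdec a b) end;
  lia.

Lemma exch S G phi : deriv S G phi -> forall G', Permutation G G' -> deriv S G' phi.
Proof.
  induction 1 as [G G0 p Hp|G|G a b d IH|G G0 a b phi Hp d1 IH1 d2 IH2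
   |G a b d1 IH1 d2 IH2|G G0 a b phi Hp d IH|G a b d IH|G a b d IH
   |G G0 a b phi Hp d1 IH1 d2 IH2|G G0 a b Hf Hp d1 IH1 d2 IH2
   |G G0 a b Hf Hp d IH|G G0 a b Hf Hp d IH|G a Hf d IH]; intros G' HP.
  - apply r_ax with G; psolve.
  - apply r_top.
  - apply r_impR, IH; psolve.
  - apply r_impL with G a b; auto; psolve.
  - apply r_andR; auto.
  - apply r_andL with G a b; auto; psolve.
  - apply r_orR1; auto.
  - apply r_orR2; auto.
  - apply r_orL with G a b; auto; psolve.
  - apply r_n with G a; auto; psolve.
  - apply r_nef with G a; auto; psolve.
  - apply r_copc with G a; auto; psolve.
  - apply r_an; auto; apply IH; psolve.
Qed.

Lemma weak S G phi : deriv S G phi -> forall x, deriv S (x::G) phi.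
Proof.
  induction 1 as [G G0 p Hp|G|G a b d IH|G G0 a b phi Hp d1 IH1 d2 IH2
   |G a b d1 IH1 d2 IH2|G G0 a b phi Hp d IH|G a b d IH|G a b d IH
   |G G0 a b phi Hp d1 IH1 d2 IH2|G G0 a b Hf Hp d1 IH1 d2 IH2
   |G G0 a b Hf Hp d IH|G G0 a b Hf Hp d IH|G a Hf d IH]; intros y.
  - apply r_ax with (y::G); psolve.
  - apply r_top.
  - apply r_impR. apply exch with (y::a::G); auto; psolve.
  - apply r_impL with (y::G) a b; [psolve|apply exch with (y::Imp a b::G)|apply exch with (y::b::G)]; auto; psolve.
  - apply r_andR; auto.
  - apply r_andL with (y::G) a b; [psolve|apply exch with (y::a::b::G)]; auto; psolve.
  - apply r_orR1; auto.
  - apply r_orR2; auto.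
  - apply r_orL with (y::G) a b; [psolve|apply exch with (y::a::G)|apply exch with (y::b::G)]; auto; psolve.
  - apply r_n with (y::G) a; auto; [psolve|apply exch with (y::Neg a::b::G)|apply exch with (y::Neg a::a::G)]; auto; psolve.
  - apply r_nef with (y::G) a; auto; [psolve|apply exch with (y::Neg a::G)]; auto; psolve.
  - apply r_copc with (y::G) a; auto; [psolve|apply exch with (y::Neg a::b::G)]; auto; psolve.
  - apply r_an; auto. apply exch with (y::a::G); auto; psolve.
Qed.

Lemma psplit (P Q : formula) G G0 : Permutation (P::G) (Q::G0) ->
  (P = Q /\ Permutation G G0) \/ (exists G1, Permutation G (Q::G1) /\ Permutation G0 (P::G1)).
Proof.
  intro H. destruct (fdec P Q) as [E|E].
  - subst. left. split; auto. eapply Permutation_cons_inv; eauto.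
  - right. assert (In Q (P::G)) as HI by (apply Permutation_in with (Q::G0); [apply Permutation_sym; auto| left; auto]).
    destruct HI as [HI|HI]; [congruence|].
    destruct (in_split _ _ HI) as [l1 [l2 E2]]. subst G.
    exists (l1++l2). split. apply Permutation_sym, Permutation_middle.
    apply Permutation_cons_inv with Q. apply Permutation_sym. eapply perm_trans; [|exact H]. psolve.
Qed.

Lemma xsplit (P : formula) G X Y : Permutation (P::G) (X++Y) ->
  (exists X0, Permutation X (P::X0) /\ Permutation G (X0++Y)) \/
  (exists Y0, Permutation Y (P::Y0) /\ Permutation G (X++Y0)).
Proof.
  intro H. assert (In P (X++Y)) as HI by (apply Permutation_in with (P::G); auto; left; auto).
  apply in_app_or in HI. destruct HI as [HI|HI]; destruct (in_split _ _ HI) as [l1 [l2 E2]]; subst.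
  - left. exists (l1++l2). split. apply Permutation_sym, Permutation_middle.
    apply Permutation_cons_inv with P. eapply perm_trans; [exact H|]. psolve.
  - right. exists (l1++l2). split. apply Permutation_sym, Permutation_middle.
    apply Permutation_cons_inv with P. eapply perm_trans; [exact H|]. psolve.
Qed.

Lemma weakL S G phi L : deriv S G phi -> deriv S (L ++ G) phi.
Proof. induction L; simpl; auto. intro; apply weak; auto. Qed.

Ltac wk H L := match type of H with deriv _ ?C _ => apply exch with (L ++ C); [apply weakL; exact H | simpl; psolve] end.

Lemma idt S A : forall G, deriv S (A::G) A.
Proof.
  induction A as [p| |a IHa b IHb|a IHa b IHb|a IHa b IHb|a IHa]; intro G.
  - apply r_ax with G; auto.
  - apply r_top.
  - apply r_andL with G a b; auto. apply r_andR.
    + apply exch with (a::b::G); auto.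
    + apply exch with (b::a::G); auto. psolve.
  - apply r_orL with G a b; auto. apply r_orR1; auto. apply r_orR2; auto.
  - apply r_impR. apply r_impL with (a::G) a b. psolve.
    apply exch with (a::Imp a b::G); auto. psolve. auto.
  - destruct S eqn:ES.
    all: try (apply r_n with G a; auto; apply exch with (a::Neg a::G); auto; psolve).
    all: apply r_copc with G a; auto; apply exch with (a::Neg a::G); auto; psolve.
Qed.
Ltac ih IH x y L := apply exch with L; [apply (IH x y); psolve | psolve].

Lemma invAndL S ctx phi : deriv S ctx phi -> forall x y K, Permutation ctx (And x y::K) -> deriv S (x::y::K) phi.
Proof.
  induction 1 as [G G0 p Hp|G|G a b d IH|G G0 a b phi Hp d1 IH1 d2 IH2
   |G a b d1 IH1 d2 IH2|G G0 a b phi Hp d IH|G a b d IH|G a b d IH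
   |G G0 a b phi Hp d1 IH1 d2 IH2|G G0 a b Hf Hp d1 IH1 d2 IH2
   |G G0 a b Hf Hp d IH|G G0 a b Hf Hp d IH|G a Hf d IH]; intros x y K HP.
  - destruct (psplit _ _ _ _ (perm_trans (Permutation_sym Hp) HP)) as [[E HE]|[G1 [H1 H2]]]; [discriminate|]. apply r_ax with (x::y::G1); psolve.
  - apply r_top.
  - apply r_impR. ih IH x y (x::y::a::K).
  - destruct (psplit _ _ _ _ (perm_trans (Permutation_sym Hp) HP)) as [[E HE]|[G1 [H1 H2]]]; [discriminate|]. apply r_impL with (x::y::G1) a b; [psolve| ih IH1 x y (x::y::Imp a b::G1) | ih IH2 x y (x::y::b::G1)].
  - apply r_andR; [apply (IH1 x y)|apply (IH2 x y)]; auto.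
  - destruct (psplit _ _ _ _ (perm_trans (Permutation_sym Hp) HP)) as [[E HE]|[G1 [H1 H2]]]; [injection E as E1 E2; subst a b; apply exch with (x::y::G); auto; psolve|]. apply r_andL with (x::y::G1) a b; [psolve| ih IH x y (x::y::a::b::G1)].
  - apply r_orR1; apply (IH x y); auto.
  - apply r_orR2; apply (IH x y); auto.
  - destruct (psplit _ _ _ _ (perm_trans (Permutation_sym Hp) HP)) as [[E HE]|[G1 [H1 H2]]]; [discriminate|]. apply r_orL with (x::y::G1) a b; [psolve| ih IH1 x y (x::y::a::G1) | ih IH2 x y (x::y::b::G1)].
  - destruct (psplit _ _ _ _ (perm_trans (Permutation_sym Hp) HP)) as [[E HE]|[G1 [H1 H2]]]; [discriminate|]. apply r_n with (x::y::G1) a; [auto|psolve| ih IH1 x y (x::y::Neg a::b::G1) | ih IH2 x y (x::y::Neg a::a::G1)].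
  - destruct (psplit _ _ _ _ (perm_trans (Permutation_sym Hp) HP)) as [[E HE]|[G1 [H1 H2]]]; [discriminate|]. apply r_nef with (x::y::G1) a; [auto|psolve| ih IH x y (x::y::Neg a::G1)].
  - destruct (psplit _ _ _ _ (perm_trans (Permutation_sym Hp) HP)) as [[E HE]|[G1 [H1 H2]]]; [discriminate|]. apply r_copc with (x::y::G1) a; [auto|psolve| ih IH x y (x::y::Neg a::b::G1)].
  - apply r_an; auto. ih IH x y (x::y::a::K).
Qed.

Lemma invOrL1 S ctx phi : deriv S ctx phi -> forall x y K, Permutation ctx (Or x y::K) -> deriv S (x::K) phi.
Proof.
  induction 1 as [G G0 p Hp|G|G a b d IH|G G0 a b phi Hp d1 IH1 d2 IH2
   |G a b d1 IH1 d2 IH2|G G0 a b phi Hp d IH|G a b d IH|G a b d IH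
   |G G0 a b phi Hp d1 IH1 d2 IH2|G G0 a b Hf Hp d1 IH1 d2 IH2
   |G G0 a b Hf Hp d IH|G G0 a b Hf Hp d IH|G a Hf d IH]; intros x y K HP.
  - destruct (psplit _ _ _ _ (perm_trans (Permutation_sym Hp) HP)) as [[E HE]|[G1 [H1 H2]]]; [discriminate|]. apply r_ax with (x::G1); psolve.
  - apply r_top.
  - apply r_impR. ih IH x y (x::a::K).
  - destruct (psplit _ _ _ _ (perm_trans (Permutation_sym Hp) HP)) as [[E HE]|[G1 [H1 H2]]]; [discriminate|]. apply r_impL with (x::G1) a b; [psolve| ih IH1 x y (x::Imp a b::G1) | ih IH2 x y (x::b::G1)].
  - apply r_andR; [apply (IH1 x y)|apply (IH2 x y)]; auto.
  - destruct (psplit _ _ _ _ (perm_trans (Permutation_sym Hp) HP)) as [[E HE]|[G1 [H1 H2]]]; [discriminate|]. apply r_andL with (x::G1) a b; [psolve| ih IH x y (x::a::b::G1)].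
  - apply r_orR1; apply (IH x y); auto.
  - apply r_orR2; apply (IH x y); auto.
  - destruct (psplit _ _ _ _ (perm_trans (Permutation_sym Hp) HP)) as [[E HE]|[G1 [H1 H2]]]; [injection E as E1 E2; subst a b; apply exch with (x::G); auto; psolve|]. apply r_orL with (x::G1) a b; [psolve| ih IH1 x y (x::a::G1) | ih IH2 x y (x::b::G1)].
  - destruct (psplit _ _ _ _ (perm_trans (Permutation_sym Hp) HP)) as [[E HE]|[G1 [H1 H2]]]; [discriminate|]. apply r_n with (x::G1) a; [auto|psolve| ih IH1 x y (x::Neg a::b::G1) | ih IH2 x y (x::Neg a::a::G1)].
  - destruct (psplit _ _ _ _ (perm_trans (Permutation_sym Hp) HP)) as [[E HE]|[G1 [H1 H2]]]; [discriminate|]. apply r_nef with (x::G1) a; [auto|psolve| ih IH x y (x::Neg a::G1)].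
  - destruct (psplit _ _ _ _ (perm_trans (Permutation_sym Hp) HP)) as [[E HE]|[G1 [H1 H2]]]; [discriminate|]. apply r_copc with (x::G1) a; [auto|psolve| ih IH x y (x::Neg a::b::G1)].
  - apply r_an; auto. ih IH x y (x::a::K).
Qed.

Lemma invOrL2 S ctx phi : deriv S ctx phi -> forall x y K, Permutation ctx (Or x y::K) -> deriv S (y::K) phi.
Proof.
  induction 1 as [G G0 p Hp|G|G a b d IH|G G0 a b phi Hp d1 IH1 d2 IH2
   |G a b d1 IH1 d2 IH2|G G0 a b phi Hp d IH|G a b d IH|G a b d IH
   |G G0 a b phi Hp d1 IH1 d2 IH2|G G0 a b Hf Hp d1 IH1 d2 IH2
   |G G0 a b Hf Hp d IH|G G0 a b Hf Hp d IH|G a Hf d IH]; intros x y K HP.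
  - destruct (psplit _ _ _ _ (perm_trans (Permutation_sym Hp) HP)) as [[E HE]|[G1 [H1 H2]]]; [discriminate|]. apply r_ax with (y::G1); psolve.
  - apply r_top.
  - apply r_impR. ih IH x y (y::a::K).
  - destruct (psplit _ _ _ _ (perm_trans (Permutation_sym Hp) HP)) as [[E HE]|[G1 [H1 H2]]]; [discriminate|]. apply r_impL with (y::G1) a b; [psolve| ih IH1 x y (y::Imp a b::G1) | ih IH2 x y (y::b::G1)].
  - apply r_andR; [apply (IH1 x y)|apply (IH2 x y)]; auto.
  - destruct (psplit _ _ _ _ (perm_trans (Permutation_sym Hp) HP)) as [[E HE]|[G1 [H1 H2]]]; [discriminate|]. apply r_andL with (y::G1) a b; [psolve| ih IH x y (y::a::b::G1)].
  - apply r_orR1; apply (IH x y); auto.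
  - apply r_orR2; apply (IH x y); auto.
  - destruct (psplit _ _ _ _ (perm_trans (Permutation_sym Hp) HP)) as [[E HE]|[G1 [H1 H2]]]; [injection E as E1 E2; subst a b; apply exch with (y::G); auto; psolve|]. apply r_orL with (y::G1) a b; [psolve| ih IH1 x y (y::a::G1) | ih IH2 x y (y::b::G1)].
  - destruct (psplit _ _ _ _ (perm_trans (Permutation_sym Hp) HP)) as [[E HE]|[G1 [H1 H2]]]; [discriminate|]. apply r_n with (y::G1) a; [auto|psolve| ih IH1 x y (y::Neg a::b::G1) | ih IH2 x y (y::Neg a::a::G1)].
  - destruct (psplit _ _ _ _ (perm_trans (Permutation_sym Hp) HP)) as [[E HE]|[G1 [H1 H2]]]; [discriminate|]. apply r_nef with (y::G1) a; [auto|psolve| ih IH x y (y::Neg a::G1)].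
  - destruct (psplit _ _ _ _ (perm_trans (Permutation_sym Hp) HP)) as [[E HE]|[G1 [H1 H2]]]; [discriminate|]. apply r_copc with (y::G1) a; [auto|psolve| ih IH x y (y::Neg a::b::G1)].
  - apply r_an; auto. ih IH x y (y::a::K).
Qed.

Lemma invImpL S ctx phi : deriv S ctx phi -> forall x y K, Permutation ctx (Imp x y::K) -> deriv S (y::K) phi.
Proof.
  induction 1 as [G G0 p Hp|G|G a b d IH|G G0 a b phi Hp d1 IH1 d2 IH2
   |G a b d1 IH1 d2 IH2|G G0 a b phi Hp d IH|G a b d IH|G a b d IH
   |G G0 a b phi Hp d1 IH1 d2 IH2|G G0 a b Hf Hp d1 IH1 d2 IH2
   |G G0 a b Hf Hp d IH|G G0 a b Hf Hp d IH|G a Hf d IH]; intros x y K HP.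
  - destruct (psplit _ _ _ _ (perm_trans (Permutation_sym Hp) HP)) as [[E HE]|[G1 [H1 H2]]]; [discriminate|]. apply r_ax with (y::G1); psolve.
  - apply r_top.
  - apply r_impR. ih IH x y (y::a::K).
  - destruct (psplit _ _ _ _ (perm_trans (Permutation_sym Hp) HP)) as [[E HE]|[G1 [H1 H2]]]; [injection E as E1 E2; subst a b; apply exch with (y::G); auto; psolve|]. apply r_impL with (y::G1) a b; [psolve| ih IH1 x y (y::Imp a b::G1) | ih IH2 x y (y::b::G1)].
  - apply r_andR; [apply (IH1 x y)|apply (IH2 x y)]; auto.
  - destruct (psplit _ _ _ _ (perm_trans (Permutation_sym Hp) HP)) as [[E HE]|[G1 [H1 H2]]]; [discriminate|]. apply r_andL with (y::G1) a b; [psolve| ih IH x y (y::a::b::G1)].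
  - apply r_orR1; apply (IH x y); auto.
  - apply r_orR2; apply (IH x y); auto.
  - destruct (psplit _ _ _ _ (perm_trans (Permutation_sym Hp) HP)) as [[E HE]|[G1 [H1 H2]]]; [discriminate|]. apply r_orL with (y::G1) a b; [psolve| ih IH1 x y (y::a::G1) | ih IH2 x y (y::b::G1)].
  - destruct (psplit _ _ _ _ (perm_trans (Permutation_sym Hp) HP)) as [[E HE]|[G1 [H1 H2]]]; [discriminate|]. apply r_n with (y::G1) a; [auto|psolve| ih IH1 x y (y::Neg a::b::G1) | ih IH2 x y (y::Neg a::a::G1)].
  - destruct (psplit _ _ _ _ (perm_trans (Permutation_sym Hp) HP)) as [[E HE]|[G1 [H1 H2]]]; [discriminate|]. apply r_nef with (y::G1) a; [auto|psolve| ih IH x y (y::Neg a::G1)].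
  - destruct (psplit _ _ _ _ (perm_trans (Permutation_sym Hp) HP)) as [[E HE]|[G1 [H1 H2]]]; [discriminate|]. apply r_copc with (y::G1) a; [auto|psolve| ih IH x y (y::Neg a::b::G1)].
  - apply r_an; auto. ih IH x y (y::a::K).
Qed.


Lemma invImpR S G f : deriv S G f -> forall x y, f = Imp x y -> deriv S (x::G) y.
Proof.
  induction 1 as [G G0 p Hp|G|G a b d IH|G G0 a b phi Hp d1 IH1 d2 IH2
   |G a b d1 IH1 d2 IH2|G G0 a b phi Hp d IH|G a b d IH|G a b d IH
   |G G0 a b phi Hp d1 IH1 d2 IH2|G G0 a b Hf Hp d1 IH1 d2 IH2
   |G G0 a b Hf Hp d IH|G G0 a b Hf Hp d IH|G a Hf d IH]; intros x y E; try discriminate.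
  - injection E as -> ->. exact d.
  - apply r_impL with (x::G) a b; [psolve| wk d1 [x] | apply exch with (x::b::G); [apply IH2; auto|psolve]].
  - apply r_andL with (x::G) a b; [psolve| apply exch with (x::a::b::G); [apply IH; auto|psolve]].
  - apply r_orL with (x::G) a b; [psolve| apply exch with (x::a::G); [apply IH1; auto|psolve]
      | apply exch with (x::b::G); [apply IH2; auto|psolve]].
Qed.

Lemma invAndR S G f : deriv S G f -> forall x y, f = And x y -> deriv S G x /\ deriv S G y.
Proof.
  induction 1 as [G G0 p Hp|G|G a b d IH|G G0 a b phi Hp d1 IH1 d2 IH2
   |G a b d1 IH1 d2 IH2|G G0 a b phi Hp d IH|G a b d IH|G a b d IH
   |G G0 a b phi Hp d1 IH1 d2 IH2|G G0 a b Hf Hp d1 IH1 d2 IH2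
   |G G0 a b Hf Hp d IH|G G0 a b Hf Hp d IH|G a Hf d IH]; intros x y E; try discriminate.
  - destruct (IH2 x y E). split; apply r_impL with G a b; auto.
  - injection E as -> ->. auto.
  - destruct (IH x y E). split; apply r_andL with G a b; auto.
  - destruct (IH1 x y E), (IH2 x y E). split; apply r_orL with G a b; auto.
Qed.

Definition cut_for S A := forall G phi, deriv S G A -> deriv S (A::G) phi -> deriv S G phi.

Ltac SPL2 Hp HP := destruct (psplit _ _ _ _ (perm_trans (Permutation_sym Hp) HP)) as [[E HE]|[G1 [H1 H2]]].

Lemma orcut S c1 c2 : cut_for S c1 -> cut_for S c2 -> forall G f, deriv S G f -> f = Or c1 c2 ->
  forall phi, deriv S (c1::G) phi -> deriv S (c2::G) phi -> deriv S G phi.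
Proof.
  intros C1 C2.
  induction 1 as [G G0 p Hp|G|G a b d IH|G G0 a b phi Hp d1 IH1 d2 IH2
   |G a b d1 IH1 d2 IH2|G G0 a b phi Hp d IH|G a b d IH|G a b d IH
   |G G0 a b phi Hp d1 IH1 d2 IH2|G G0 a b Hf Hp d1 IH1 d2 IH2
   |G G0 a b Hf Hp d IH|G G0 a b Hf Hp d IH|G a Hf d IH]; intros E psi h1 h2; try discriminate.
  - apply r_impL with G a b; auto. apply IH2; auto.
    + apply exch with (b::c1::G); [apply (invImpL _ _ _ h1 a b)|]; psolve.
    + apply exch with (b::c2::G); [apply (invImpL _ _ _ h2 a b)|]; psolve.
  - apply r_andL with G a b; auto. apply IH; auto.
    + apply exch with (a::b::c1::G); [apply (invAndL _ _ _ h1 a b)|]; psolve.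
    + apply exch with (a::b::c2::G); [apply (invAndL _ _ _ h2 a b)|]; psolve.
  - injection E as -> ->. apply C1; auto.
  - injection E as -> ->. apply C2; auto.
  - apply r_orL with G a b; auto; [apply IH1|apply IH2]; auto.
    + apply exch with (a::c1::G); [apply (invOrL1 _ _ _ h1 a b)|]; psolve.
    + apply exch with (a::c2::G); [apply (invOrL1 _ _ _ h2 a b)|]; psolve.
    + apply exch with (b::c1::G); [apply (invOrL2 _ _ _ h1 a b)|]; psolve.
    + apply exch with (b::c2::G); [apply (invOrL2 _ _ _ h2 a b)|]; psolve.
Qed.

Ltac flagx := match goal with
  | H1 : has_n ?S = true, H2 : has_copc ?S = true |- _ => destruct S; discriminate
  | H1 : has_n ?S = true, H2 : has_an ?S = true |- _ => destruct S; discriminate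
  | H1 : has_nef ?S = true, H2 : has_copc ?S = true |- _ => destruct S; discriminate
  | H1 : has_nef ?S = true, H2 : has_an ?S = true |- _ => destruct S; discriminate
  end.

Lemma ncut_n S c : cut_for S c -> forall G f, deriv S G f -> f = Neg c ->
  forall be, has_n S = true -> deriv S (be::G) c -> deriv S (c::G) be -> deriv S G (Neg be).
Proof.
  intros C.
  induction 1 as [G G0 p Hp|G|G a b d IH|G G0 a b phi Hp d1 IH1 d2 IH2
   |G a b d1 IH1 d2 IH2|G G0 a b phi Hp d IH|G a b d IH|G a b d IH
   |G G0 a b phi Hp d1 IH1 d2 IH2|G G0 a b Hf Hp d1 IH1 d2 IH2
   |G G0 a b Hf Hp d IH|G G0 a b Hf Hp d IH|G a Hf d IH]; intros E be Hn h1 h2; try discriminate;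
   try flagx.
  - apply r_impL with G a b; auto. apply IH2; auto.
    + apply exch with (b::be::G); [apply (invImpL _ _ _ h1 a b)|]; psolve.
    + apply exch with (b::c::G); [apply (invImpL _ _ _ h2 a b)|]; psolve.
  - apply r_andL with G a b; auto. apply IH; auto.
    + apply exch with (a::b::be::G); [apply (invAndL _ _ _ h1 a b)|]; psolve.
    + apply exch with (a::b::c::G); [apply (invAndL _ _ _ h2 a b)|]; psolve.
  - apply r_orL with G a b; auto; [apply IH1|apply IH2]; auto.
    + apply exch with (a::be::G); [apply (invOrL1 _ _ _ h1 a b)|]; psolve.
    + apply exch with (a::c::G); [apply (invOrL1 _ _ _ h2 a b)|]; psolve.
    + apply exch with (b::be::G); [apply (invOrL2 _ _ _ h1 a b)|]; psolve.
    + apply exch with (b::c::G); [apply (invOrL2 _ _ _ h2 a b)|]; psolve.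
  - injection E as ->. apply r_n with G a; auto.
    + apply C. apply exch with (be::G0); auto; psolve. wk d1 [be].
    + apply C. auto. wk h2 [a].
  - apply r_nef with G a; auto.
Qed.

Lemma ncut_nef S c : cut_for S c -> forall G f, deriv S G f -> f = Neg c ->
  forall be, has_nef S = true -> deriv S G c -> deriv S G (Neg be).
Proof.
  intros C.
  induction 1 as [G G0 p Hp|G|G a b d IH|G G0 a b phi Hp d1 IH1 d2 IH2
   |G a b d1 IH1 d2 IH2|G G0 a b phi Hp d IH|G a b d IH|G a b d IH
   |G G0 a b phi Hp d1 IH1 d2 IH2|G G0 a b Hf Hp d1 IH1 d2 IH2
   |G G0 a b Hf Hp d IH|G G0 a b Hf Hp d IH|G a Hf d IH]; intros E be Hn h1; try discriminate;
   try flagx.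
  - apply r_impL with G a b; auto. apply IH2; auto.
    apply (invImpL _ _ _ h1 a b); psolve.
  - apply r_andL with G a b; auto. apply IH; auto.
    apply (invAndL _ _ _ h1 a b); psolve.
  - apply r_orL with G a b; auto; [apply IH1|apply IH2]; auto.
    apply (invOrL1 _ _ _ h1 a b); psolve.
    apply (invOrL2 _ _ _ h1 a b); psolve.
  - injection E as ->. apply r_nef with G a; auto.
    apply C. apply exch with G0; auto; psolve. wk d1 ([]:list formula).
  - apply r_nef with G a; auto.
Qed.

Lemma ncut_copc S c : cut_for S c -> forall G f, deriv S G f -> f = Neg c ->
  forall be, has_copc S = true -> deriv S (be::G) c -> deriv S G (Neg be).
Proof.
  intros C.
  induction 1 as [G G0 p Hp|G|G a b d IH|G G0 a b phi Hp d1 IH1 d2 IH2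
   |G a b d1 IH1 d2 IH2|G G0 a b phi Hp d IH|G a b d IH|G a b d IH
   |G G0 a b phi Hp d1 IH1 d2 IH2|G G0 a b Hf Hp d1 IH1 d2 IH2
   |G G0 a b Hf Hp d IH|G G0 a b Hf Hp d IH|G a Hf d IH]; intros E be Hn h1; try discriminate;
   try flagx.
  - apply r_impL with G a b; auto. apply IH2; auto.
    apply exch with (b::be::G); [apply (invImpL _ _ _ h1 a b)|]; psolve.
  - apply r_andL with G a b; auto. apply IH; auto.
    apply exch with (a::b::be::G); [apply (invAndL _ _ _ h1 a b)|]; psolve.
  - apply r_orL with G a b; auto; [apply IH1|apply IH2]; auto.
    apply exch with (a::be::G); [apply (invOrL1 _ _ _ h1 a b)|]; psolve.
    apply exch with (b::be::G); [apply (invOrL2 _ _ _ h1 a b)|]; psolve.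
  - injection E as ->. apply r_copc with G a; auto.
    apply C. apply exch with (be::G0); auto; psolve. wk d [be].
  - injection E as ->. apply r_an; auto.
    assert (X : deriv S (c::G) (Neg be)) by (apply IH; auto; wk h1 [c]).
    apply C; auto. wk X [be].
Qed.

Definition sub_ok S A := match A with
  | And a b | Or a b | Imp a b => cut_for S a /\ cut_for S b
  | Neg a => cut_for S a | _ => True end.

Lemma cut_step S A : sub_ok S A -> forall ctx phi, deriv S ctx phi ->
  forall K, Permutation ctx (A::K) -> deriv S K A -> deriv S K phi.
Proof.
  intros Hs.
  induction 1 as [G G0 p Hp|G|G a b d IH|G G0 a b phi Hp d1 IH1 d2 IH2
   |G a b d1 IH1 d2 IH2|G G0 a b phi Hp d IH|G a b d IH|G a b d IH
   |G G0 a b phi Hp d1 IH1 d2 IH2|G G0 a b Hf Hp d1 IH1 d2 IH2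
   |G G0 a b Hf Hp d IH|G G0 a b Hf Hp d IH|G a Hf d IH]; intros K HP HL.
  - SPL2 Hp HP.
    + subst A. exact HL.
    + apply r_ax with G1; psolve.
  - apply r_top.
  - apply r_impR. apply IH. psolve. wk HL [a].
  - SPL2 Hp HP.
    + subst A. destruct Hs as [Ca Cb].
      assert (X1 : deriv S K a) by (apply IH1; auto; psolve).
      assert (X2 : deriv S (a::K) b) by (apply (invImpR _ _ _ HL a b); auto).
      apply Cb. apply Ca; auto. apply exch with (b::G); auto; psolve.
    + apply r_impL with G1 a b; [psolve| |].
      * apply IH1. psolve. apply exch with K; auto; psolve.
      * apply IH2. psolve. apply (invImpL _ _ _ HL a b); psolve.
  - apply r_andR; auto.
  - SPL2 Hp HP.
    + subst A. destruct Hs as [Ca Cb]. destruct (invAndR _ _ _ HL a b eq_refl) as [Xa Xb].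
      apply Ca; auto. apply Cb. wk Xb [a]. apply exch with (a::b::G); auto; psolve.
    + apply r_andL with G1 a b; [psolve|].
      apply IH. psolve. apply (invAndL _ _ _ HL a b); psolve.
  - apply r_orR1; auto.
  - apply r_orR2; auto.
  - SPL2 Hp HP.
    + subst A. destruct Hs as [Ca Cb]. apply (orcut S a b Ca Cb K _ HL eq_refl).
      apply exch with (a::G); auto; psolve. apply exch with (b::G); auto; psolve.
    + apply r_orL with G1 a b; [psolve| |].
      * apply IH1. psolve. apply (invOrL1 _ _ _ HL a b); psolve.
      * apply IH2. psolve. apply (invOrL2 _ _ _ HL a b); psolve.
  - SPL2 Hp HP.
    + subst A. simpl in Hs. apply (ncut_n S a Hs K _ HL eq_refl b Hf).
      * apply IH1. psolve. wk HL [b].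
      * apply IH2. psolve. wk HL [a].
    + apply r_n with G1 a; [auto|psolve| |].
      * apply IH1. psolve. wk HL [b].
      * apply IH2. psolve. wk HL [a].
  - SPL2 Hp HP.
    + subst A. simpl in Hs. apply (ncut_nef S a Hs K _ HL eq_refl b Hf).
      apply IH. psolve. exact HL.
    + apply r_nef with G1 a; [auto|psolve|].
      apply IH. psolve. apply exch with K; auto; psolve.
  - SPL2 Hp HP.
    + subst A. simpl in Hs. apply (ncut_copc S a Hs K _ HL eq_refl b Hf).
      apply IH. psolve. wk HL [b].
    + apply r_copc with G1 a; [auto|psolve|].
      apply IH. psolve. wk HL [b].
  - apply r_an; auto. apply IH. psolve. wk HL [a].
Qed.

Lemma cut S A : cut_for S A.
Proof.
  induction A; intros G phi HL HR; (eapply cut_step; [|exact HR|apply Permutation_refl|exact HL]); simpl; auto.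
Qed.

Lemma flat_perm X X' : Permutation X X' -> forall p, In p (flat_map vars X) <-> In p (flat_map vars X').
Proof.
  intros H p. rewrite !in_flat_map. split; intros [f [H1 H2]]; exists f; split; auto.
  - eapply Permutation_in; eauto.
  - eapply Permutation_in; [apply Permutation_sym|]; eauto.
Qed.

Ltac vs0 := let p := fresh "p" in let Hq := fresh "Hq" in intros p Hq;
  repeat match goal with H : forall q, In q (vars _) -> _ |- _ => specialize (H p) end;
  simpl in *; repeat rewrite in_app_iff in *; simpl In in *; tauto.
Ltac vs HX := let p := fresh "p" in let Hq := fresh "Hq" in intros p Hq;
  simpl flat_map; rewrite ?in_app_iff; rewrite (flat_perm _ _ HX p);
  repeat match goal with H : forall q, In q (vars _) -> _ |- _ => specialize (H p) end;
  simpl in *; repeat rewrite in_app_iff in *; simpl In in *; tauto.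

Definition IP S X Y phi := exists s, (forall p, In p (vars s) -> In p (flat_map vars X) /\ In p (flat_map vars (phi::Y)))
   /\ deriv S X s /\ deriv S (s::Y) phi.

Ltac XS Hp HXY := destruct (xsplit _ _ _ _ (perm_trans (Permutation_sym Hp) HXY)) as [[X0 [HX HG]]|[Y0 [HY HG]]].

Lemma interp S ctx phi : deriv S ctx phi -> forall X Y, Permutation ctx (X++Y) -> IP S X Y phi.
Proof.
  unfold IP.
  induction 1 as [G G0 p Hp|G|G a b d IH|G G0 a b phi Hp d1 IH1 d2 IH2
   |G a b d1 IH1 d2 IH2|G G0 a b phi Hp d IH|G a b d IH|G a b d IH
   |G G0 a b phi Hp d1 IH1 d2 IH2|G G0 a b Hf Hp d1 IH1 d2 IH2
   |G G0 a b Hf Hp d IH|G G0 a b Hf Hp d IH|G a Hf d IH]; intros X Y HXY.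
  - XS Hp HXY.
    + exists (Var p). split; [vs HX|split]. apply r_ax with X0; psolve. apply r_ax with Y; psolve.
    + exists Top. split; [vs0|split]. apply r_top. apply r_ax with (Top::Y0); psolve.
  - exists Top. split; [vs0|split]; apply r_top.
  - destruct (IH X (a::Y) ltac:(psolve)) as [s [Hv [D1 D2]]].
    exists s; split; [vs0|split; auto]. apply r_impR. apply exch with (s::a::Y); auto; psolve.
  - XS Hp HXY.
    + destruct (IH1 Y (Imp a b::X0) ltac:(psolve)) as [s1 [Hv1 [D11 D12]]].
      destruct (IH2 (b::X0) Y ltac:(psolve)) as [s2 [Hv2 [D21 D22]]].
      exists (Imp s1 s2). split; [vs HX|split].
      * apply r_impR. apply r_impL with (s1::X0) a b; [psolve | apply exch with (s1::Imp a b::X0); auto; psolve | wk D21 [s1]].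
      * apply r_impL with Y s1 s2; [psolve | wk D11 [Imp s1 s2] | exact D22].
    + destruct (IH1 X (Imp a b::Y0) ltac:(psolve)) as [s1 [Hv1 [D11 D12]]].
      destruct (IH2 X (b::Y0) ltac:(psolve)) as [s2 [Hv2 [D21 D22]]].
      exists (And s1 s2). split; [vs HY|split].
      * apply r_andR; auto.
      * apply r_andL with Y s1 s2; [psolve|].
        apply r_impL with (s1::s2::Y0) a b; [psolve| wk D12 [s2] | wk D22 [s1]].
  - destruct (IH1 X Y HXY) as [s1 [Hv1 [D11 D12]]].
    destruct (IH2 X Y HXY) as [s2 [Hv2 [D21 D22]]].
    exists (And s1 s2). split; [vs0|split].
    * apply r_andR; auto.
    * apply r_andR; (apply r_andL with Y s1 s2; [psolve|]); [wk D12 [s2] | wk D22 [s1]].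
  - XS Hp HXY.
    + destruct (IH (a::b::X0) Y ltac:(psolve)) as [s [Hv [D1 D2]]].
      exists s. split; [vs HX|split; auto]. apply r_andL with X0 a b; [psolve|exact D1].
    + destruct (IH X (a::b::Y0) ltac:(psolve)) as [s [Hv [D1 D2]]].
      exists s. split; [vs HY|split; auto]. apply r_andL with (s::Y0) a b; [psolve| apply exch with (s::a::b::Y0); auto; psolve].
  - destruct (IH X Y HXY) as [s [Hv [D1 D2]]]. exists s. split; [vs0|split; auto]. apply r_orR1; auto.
  - destruct (IH X Y HXY) as [s [Hv [D1 D2]]]. exists s. split; [vs0|split; auto]. apply r_orR2; auto.
  - XS Hp HXY.
    + destruct (IH1 (a::X0) Y ltac:(psolve)) as [s1 [Hv1 [D11 D12]]].
      destruct (IH2 (b::X0) Y ltac:(psolve)) as [s2 [Hv2 [D21 D22]]].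
      exists (Or s1 s2). split; [vs HX|split].
      * apply r_orL with X0 a b; [psolve| apply r_orR1; auto| apply r_orR2; auto].
      * apply r_orL with Y s1 s2; [psolve|auto|auto].
    + destruct (IH1 X (a::Y0) ltac:(psolve)) as [s1 [Hv1 [D11 D12]]].
      destruct (IH2 X (b::Y0) ltac:(psolve)) as [s2 [Hv2 [D21 D22]]].
      exists (And s1 s2). split; [vs HY|split].
      * apply r_andR; auto.
      * apply r_andL with Y s1 s2; [psolve|].
        apply r_orL with (s1::s2::Y0) a b; [psolve| wk D12 [s2] | wk D22 [s1]].
  - XS Hp HXY.
    + destruct (IH1 (b::Y) (Neg a::X0) ltac:(psolve)) as [s1 [Hv1 [D11 D12]]].
      destruct (IH2 (Neg a::a::X0) Y ltac:(psolve)) as [s2 [Hv2 [D21 D22]]].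
      exists (And (Imp s1 s2) (Imp (Imp s2 s1) (Neg s1))). split; [vs HX|split].
      * apply r_andR.
        -- apply r_impR. apply (cut S a).
           ++ apply exch with (s1::Neg a::X0); auto; psolve.
           ++ wk D21 [s1].
        -- apply r_impR. apply r_n with (Imp s2 s1::X0) a; [auto|psolve| wk D12 [Imp s2 s1] | ].
           apply r_impL with (Neg a::a::X0) s2 s1; [psolve| wk D21 [Imp s2 s1] | apply idt ].
      * apply r_andL with Y (Imp s1 s2) (Imp (Imp s2 s1) (Neg s1)); [psolve|].
        apply r_impL with (Imp s1 s2::Y) (Imp s2 s1) (Neg s1); [psolve| | ].
        -- apply r_impR. apply (cut S b).
           ++ wk D22 [Imp (Imp s2 s1) (Neg s1); Imp s1 s2].
           ++ wk D11 [s2; Imp (Imp s2 s1) (Neg s1); Imp s1 s2].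
        -- apply r_n with (Imp s1 s2::Y) s1; [auto|psolve| wk D11 [Imp s1 s2; Neg s1] | ].
           apply r_impL with (Neg s1::s1::Y) s1 s2; [psolve| apply exch with (s1::Imp s1 s2::Neg s1::Y); [apply idt|psolve] | wk D22 [Neg s1; s1]].
    + destruct (IH1 X (Neg a::b::Y0) ltac:(psolve)) as [s1 [Hv1 [D11 D12]]].
      destruct (IH2 X (Neg a::a::Y0) ltac:(psolve)) as [s2 [Hv2 [D21 D22]]].
      exists (And s1 s2). split; [vs HY|split].
      * apply r_andR; auto.
      * apply r_andL with Y s1 s2; [psolve|].
        apply r_n with (s1::s2::Y0) a; [auto|psolve| wk D12 [s2] | wk D22 [s1]].
  - XS Hp HXY.
    + destruct (IH Y (Neg a::X0) ltac:(psolve)) as [s1 [Hv1 [D1 D2]]].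
      exists (Imp s1 (Neg Top)). split; [vs HX|split].
      * apply r_impR. apply r_nef with (s1::X0) a; [auto|psolve|apply exch with (s1::Neg a::X0); auto; psolve].
      * apply r_impL with Y s1 (Neg Top); [psolve| wk D1 [Imp s1 (Neg Top)] | ].
        apply r_nef with Y Top; [auto|psolve|apply r_top].
    + destruct (IH X (Neg a::Y0) ltac:(psolve)) as [s1 [Hv1 [D1 D2]]].
      exists s1. split; [vs HY|split; auto].
      apply r_nef with (s1::Y0) a; [auto|psolve|apply exch with (s1::Neg a::Y0); auto; psolve].
  - XS Hp HXY.
    + destruct (IH (b::Y) (Neg a::X0) ltac:(psolve)) as [s1 [Hv1 [D1 D2]]].
      exists (Neg s1). split; [vs HX|split].
      * apply r_copc with X0 a; [auto|psolve|apply exch with (s1::Neg a::X0); auto; psolve].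
      * apply r_copc with Y s1; [auto|psolve|wk D1 [Neg s1]].
    + destruct (IH X (Neg a::b::Y0) ltac:(psolve)) as [s1 [Hv1 [D1 D2]]].
      exists s1. split; [vs HY|split; auto].
      apply r_copc with (s1::Y0) a; [auto|psolve|apply exch with (s1::Neg a::b::Y0); auto; psolve].
  - destruct (IH X (a::Y) ltac:(psolve)) as [s [Hv [D1 D2]]].
    exists s. split; [vs0|split; auto]. apply r_an; [auto| apply exch with (s::a::Y); auto; psolve].
Qed.

Theorem theorem4p3 (S : system) (G D : list formula) (phi : formula) :
  (exists p, common_lang G D phi p) ->
  deriv S (G ++ D) phi ->
  exists sigma : formula,
    (forall p, occurs p sigma -> common_lang G D phi p) /\
    deriv S G sigma /\ deriv S (sigma :: D) phi.
Proof.
  intros _ H. destruct (interp S _ _ H G D (Permutation_refl _)) as [s [Hv [D1 D2]]].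
  exists s. split; [|split; auto].
  intros p Hp. destruct (Hv p Hp) as [H1 H2]. unfold common_lang, occurs_in.
  apply in_flat_map in H1. apply in_flat_map in H2. split; exact H1 || exact H2.
Qed.
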